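(* Let $n,r,k$ be positive integers with $n\ge 2(k+r)$, let $D$ be a minimum-cardinality $k$-dominating set of the Kneser graph $K(n,r)$, and let $\tilde u\subseteq [n]$ with $|\tilde u|=r-1$. Then there exists $x\in[n]\setminus\tilde u$ such that $\tilde u\cup\{x\}\notin D$.
   Context: For integers $n\ge 2r$, the Kneser graph $K(n,r)$ has as vertices the $r$-element subsets of $[n]=\{1,\dots,n\}$, two vertices being adjacent iff they are disjoint. For a graph $G$ and positive integer $k$, a set $D\subseteq V(G)$ is $k$-dominating if every vertex $u\in V(G)\setminus D$ has at least $k$ neighbors in $D$. *)

(* Defs.v *)
From mathcomp Require Import all_boot.
Set Implicit Arguments. Unset Strict Implicit. Unset Printing Implicit Defensive.

Definition kneser_vertex (n r : nat) (A : {set 'I_n}) : bool := #|A| == r.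

Definition kneser_adj (n r : nat) (A B : {set 'I_n}) : bool :=
  [&& kneser_vertex r A, kneser_vertex r B & [disjoint A & B]].

Definition k_dominating (n r k : nat) (D : {set {set 'I_n}}) : Prop :=
  (forall A, A \in D -> kneser_vertex r A) /\
  (forall u : {set 'I_n}, kneser_vertex r u -> u \notin D ->
     k <= #|[set v in D | kneser_adj r u v]|).

Definition min_k_dominating (n r k : nat) (D : {set {set 'I_n}}) : Prop :=
  k_dominating r k D /\
  (forall D' : {set {set 'I_n}}, k_dominating r k D' -> #|D| <= #|D'|).

(* Main.v *)
Require Import Defs.
From mathcomp Require Import all_boot.
From mathcomp Require Import zify.
From Stdlib Require Import Lia.

Set Implicit Arguments. Unset Strict Implicit. Unset Printing Implicit Defensive.

Lemma pick_sub (T : finType) (A : {set T}) m :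
  m <= #|A| -> exists B : {set T}, B \subset A /\ #|B| = m.
Proof.
move=> /card_geqP [s [us ss sA]].
exists [set x in s]; split.
  by apply/subsetP => x; rewrite inE => /sA.
by rewrite cardsE (card_uniqP us).
Qed.

Lemma add_inj (T : finType) (A : {set T}) x y :
  x \notin A -> y \notin A -> x |: A = y |: A -> x = y.
Proof.
move=> xA yA E.
have : x \in y |: A by rewrite -E setU11.
by rewrite in_setU1 => /orP [/eqP //| xA']; rewrite xA' in xA.
Qed.

Lemma disj_from (T : finType) (A B : {set T}) :
  (forall y, y \in A -> y \in B -> False) -> [disjoint A & B].
Proof.
move=> H; apply/pred0P => y /=; apply/negbTE/negP => /andP [h1 h2].
exact: (H y h1 h2).
Qed.

Lemma aux1 k r t : t <= r -> k <= k + r - t.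
Proof. lia. Qed.

Theorem lemma2p2 (n r k : nat) (D : {set {set 'I_n}}) (ut : {set 'I_n}) :
  0 < r -> 0 < k -> 2 * (k + r) <= n ->
  min_k_dominating r k D ->
  #|ut| = r - 1 ->
  exists x : 'I_n, x \notin ut /\ (x |: ut) \notin D.
Proof.
move=> r0 k0 hn [[Dv Ddom] Dmin] hut.
case: (boolP [exists x, (x \notin ut) && (x |: ut \notin D)]).
  by move=> /existsP [x /andP [h1 h2]]; exists x.
rewrite negb_exists => /forallP hall.
have FD : forall x, x \notin ut -> x |: ut \in D.
  by move=> x hx; move: (hall x); rewrite hx /= negbK.
exfalso.
set S := ~: ut.
have cS : #|S| = n - (r - 1) by have := cardsC ut; rewrite card_ord hut /S; lia.
have [K [KS cK]] : exists K : {set 'I_n}, K \subset S /\ #|K| = k + r.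
  by apply: pick_sub; lia.
have [P [PK cP]] : exists P : {set 'I_n}, P \subset K /\ #|P| = r - 1.
  by apply: pick_sub; lia.
have cKP : #|K :\: P| = k + 1 by rewrite cardsDS // cK cP; lia.
have [Q [QKP cQ]] : exists Q : {set 'I_n}, Q \subset K :\: P /\ #|Q| = k.
  by apply: pick_sub; lia.
have inS : forall y, y \in S -> y \notin ut by move=> y; rewrite inE.
have cadd : forall (A : {set 'I_n}) y, y \notin A -> #|y |: A| = #|A|.+1.
  by move=> A y hy; rewrite cardsU1 hy.
set R := [set x |: ut | x in S :\: K].
set G := [set q |: P | q in Q].
set D' := (D :\: R) :|: G.
have QK : forall q, q \in Q -> q \in K /\ q \notin P.
  move=> q /(subsetP QKP); rewrite inE => /andP [h1 h2]; by [].
have GK : forall q y, q \in Q -> y \in q |: P -> y \in K.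
  move=> q y /QK [qK _]; rewrite in_setU1 => /orP [/eqP -> //|].
  by move/(subsetP PK).
have cG : #|G| = k.
  rewrite card_in_imset ?cQ // => q1 q2 /QK [_ h1] /QK [_ h2]; exact: add_inj.
have RD : R \subset D.
  apply/subsetP => v /imsetP [x]; rewrite inE => /andP [_ xS] ->.
  exact: FD (inS _ xS).
have cR : #|R| = #|S :\: K|.
  rewrite card_in_imset // => x1 x2; rewrite !inE => /andP [_ h1] /andP [_ h2].
  exact: add_inj.
have cSK : #|S :\: K| = #|S| - #|K| by rewrite cardsDS.
have vR : forall v, v \in R -> exists2 x, x \notin ut /\ x \notin K & v = x |: ut.
  move=> v /imsetP [x]; rewrite !inE => /andP [h1 h2] ->.
  by exists x => //; split.
have D'v : forall A, A \in D' -> kneser_vertex r A.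
  move=> A; rewrite in_setU in_setD => /orP [/andP [_ /Dv] //|].
  move=> /imsetP [q /QK [_ qP] ->].
  by rewrite /kneser_vertex cadd // cP subn1 prednK.
have domD' : k_dominating r k D'.
  split; first exact: D'v.
  move=> u uv uD'.
  have adjG : forall x, x \notin ut -> x \notin K -> u = x |: ut ->
      G \subset [set v in D' | kneser_adj r u v].
    move=> x xut xK eu; apply/subsetP => v vG; rewrite inE.
    have vD' : v \in D' by rewrite in_setU vG orbT.
    rewrite vD' /= /kneser_adj uv (D'v v vD') /= eu.
    move: vG => /imsetP [q qQ ->].
    apply: disj_from => y; rewrite in_setU1 => /orP [/eqP -> /(GK _ _ qQ) yK|yut /(GK _ _ qQ) yK].
      by rewrite yK in xK.
    by move: (subsetP KS y yK); rewrite inE yut.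
  case: (boolP (u \in R)) => uR.
    have [x [xut xK] ux] := vR u uR.
    by rewrite -cG; apply: subset_leq_card; apply: (adjG x).
  have uD : u \notin D.
    by apply/negP => uD; move: uD'; rewrite in_setU in_setD uR uD.
  case: (boolP [disjoint u & ut]) => dut.
    set T := [set y |: ut | y in K :\: u].
    have cT : #|T| = #|K :\: u|.
      rewrite card_in_imset // => y1 y2; rewrite !inE => /andP [_ h1] /andP [_ h2].
      apply: add_inj; apply: inS; by apply: (subsetP KS).
    have cKu : k <= #|K :\: u|.
      rewrite cardsD cK.
      have : #|K :&: u| <= #|u| by apply: subset_leq_card; apply: subsetIr.
      move: uv; rewrite /kneser_vertex => /eqP ->; exact: aux1.
    apply: (leq_trans cKu); rewrite -cT; apply: subset_leq_card.
    apply/subsetP => v /imsetP [y]; rewrite inE => /andP [yu yK] ->.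
    have yut : y \notin ut by apply: inS; apply: (subsetP KS).
    rewrite inE in_setU in_setD.
    have -> : y |: ut \notin R.
      apply/negP => /vR [x [xut xK] E].
      by move: yK; rewrite (add_inj yut xut E) (negbTE xK).
    rewrite FD //= /kneser_adj uv /kneser_vertex cadd // hut.
    have -> : (r - 1).+1 == r by rewrite subn1 prednK.
    apply: disj_from => z zu; rewrite in_setU1 => /orP [/eqP ez|zut].
      by rewrite -ez zu in yu.
    by move/pred0P: dut => /(_ z) /=; rewrite zu zut.
  apply: (leq_trans (Ddom u uv uD)); apply: subset_leq_card.
  apply/subsetP => v; rewrite !inE => /andP [vD adj]; rewrite adj andbT vD /=.
  apply/orP; left; apply/andP; split=> //.
  apply/negP => /vR [x _ E]; move: adj dut; rewrite E /kneser_adj => /and3P [_ _ d].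
  apply/negP/negPn; apply: disj_from => z zu zut.
  move/pred0P: d => /(_ z) /=; rewrite zu in_setU1 zut orbT //.
have h1 := Dmin D' domD'.
have h2 : #|D'| <= #|D :\: R| + #|G| by case: (leq_card_setU (D :\: R) G).
have h3 : #|D :\: R| = #|D| - #|R| by rewrite cardsDS.
have h4 : #|R| <= #|D| by apply: subset_leq_card.
move: h1 h2 h3 h4; rewrite cG cR cSK cS cK.
move: #|D| #|D'| #|D :\: R| => a b c.
clear -hn r0 k0; lia.
Qed.
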